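(* Let $1\to K\to G\to H\to 1$ be a short exact sequence of countable discrete groups, each equipped with a proper left-invariant metric. If $K$ and $H$ have finite APC-decomposition complexity, then $G$ has finite APC-decomposition complexity.
   Context: Every countable group carries a proper left-invariant metric (e.g. a weighted word metric with proper weights), unique up to coarse equivalence. A family $\mathcal{U}$ of metric subspaces of $(X,d)$ is $r$-disjoint if $d(x,y)>r$ whenever $x\in U$, $y\in U'$, $U\neq U'$ in $\mathcal{U}$. For families $\mathcal{X},\mathcal{Y}$ and $R\in\mathbb{R}^{\mathbb{N}}$, $\mathcal{X}\xrightarrow{R}\mathcal{Y}$ means: there is an integer $k$ such that for each $X\in\mathcal{X}$ there are subcollections $\mathcal{U}_1,\dots,\mathcal{U}_k\subseteq\mathcal{Y}$ of subspaces of $X$, each $\mathcal{U}_i$ being $R_i$-disjoint, with $\bigcup_i\mathcal{U}_i$ covering $X$. A family is bounded if the diameters of its members are uniformly bounded. $\mathfrak{C}_0$ is the class of bounded families; for an ordinal $\alpha>0$, $\mathfrak{C}_\alpha$ is the class of families $\mathcal{X}$ such that for every $R\in\mathbb{R}^{\mathbb{N}}$ there exist $\beta<\alpha$ and $\mathcal{Y}\in\mathfrak{C}_\beta$ with $\mathcal{X}\xrightarrow{R}\mathcal{Y}$. A metric space has finite APC-decomposition complexity if it is a member of some family belonging to $\mathfrak{C}_\alpha$ for some ordinal $\alpha$. *)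

(* Defs.v *)
From Stdlib Require Import Reals List.
Open Scope R_scope.

Record Group := {
  carrier :> Type;
  gmul : carrier -> carrier -> carrier;
  ginv : carrier -> carrier;
  gone : carrier;
  gmul_assoc : forall x y z, gmul x (gmul y z) = gmul (gmul x y) z;
  gmul_1l : forall x, gmul gone x = x;
  gmul_Vl : forall x, gmul (ginv x) x = gone
}.

Arguments gmul {g}.
Arguments ginv {g}.
Arguments gone {g}.

Definition countable_group (G : Group) : Prop :=
  exists f : G -> nat, forall x y, f x = f y -> x = y.

Definition is_hom {G H : Group} (f : G -> H) : Prop :=
  forall x y, f (gmul x y) = gmul (f x) (f y).

Definition short_exact {K G H : Group} (i : K -> G) (p : G -> H) : Prop :=
  is_hom i /\ is_hom p /\
  (forall x y, i x = i y -> x = y) /\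
  (forall h, exists g, p g = h) /\
  (forall g, p g = gone <-> exists k, i k = g).

Definition is_metric {M : Type} (d : M -> M -> R) : Prop :=
  (forall x y, 0 <= d x y) /\
  (forall x y, d x y = 0 <-> x = y) /\
  (forall x y, d x y = d y x) /\
  (forall x y z, d x z <= d x y + d y z).

(** proper: every closed ball is compact, i.e. (the space being discrete) finite *)
Definition proper_metric {M : Type} (d : M -> M -> R) : Prop :=
  forall (x : M) (r : R), exists l : list M, forall y, d x y <= r -> In y l.

Definition left_invariant {G : Group} (d : G -> G -> R) : Prop :=
  forall g x y, d (gmul g x) (gmul g y) = d x y.

Definition proper_left_invariant_metric {G : Group} (d : G -> G -> R) : Prop :=
  is_metric d /\ proper_metric d /\ left_invariant d.

(** Families of metric subspaces of (M,d): sets of subsets of M,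
    each subset carrying the restricted metric. *)
Definition family (M : Type) := (M -> Prop) -> Prop.

Definition r_disjoint {M : Type} (d : M -> M -> R) (r : R) (U : family M) : Prop :=
  forall A B, U A -> U B -> A <> B -> forall x y, A x -> B y -> d x y > r.

Definition bounded_family {M : Type} (d : M -> M -> R) (F : family M) : Prop :=
  exists b : R, forall X, F X -> forall x y, X x -> X y -> d x y <= b.

(** X --R--> Y ; the sequence R is indexed from 0, so R_1..R_k of the
    paper are Rs 0 .. Rs (k-1). *)
Definition decomposes {M : Type} (d : M -> M -> R) (X Y : family M)
  (Rs : nat -> R) : Prop :=
  exists k : nat, forall A, X A ->
    exists U : nat -> family M,
      (forall j, (j < k)%nat -> forall B, U j B -> Y B /\ (forall x, B x -> A x)) /\
      (forall j, (j < k)%nat -> r_disjoint d (Rs j) (U j)) /\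
      (forall x, A x -> exists j B, (j < k)%nat /\ U j B /\ B x).

(** The union over all ordinals alpha of the classes C_alpha, defined as the
    least class containing the bounded families and closed under the
    defining rule of C_alpha (alpha > 0). *)
Inductive finite_APC_family {M : Type} (d : M -> M -> R) : family M -> Prop :=
| APC_bounded : forall X, bounded_family d X -> finite_APC_family d X
| APC_step : forall X,
    (forall Rs : nat -> R, exists Y, finite_APC_family d Y /\ decomposes d X Y Rs) ->
    finite_APC_family d X.

Definition finite_APC {M : Type} (d : M -> M -> R) : Prop :=
  exists F : family M, F (fun _ => True) /\ finite_APC_family d F.

(* Main.v *)
From Stdlib Require Import Reals Lra Classical ClassicalEpsilon List.
Require Import Defs.
Open Scope R_scope.

Fixpoint fin_ind' {M : Type} (d : M -> M -> R) (P : family M -> Prop)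
  (Hb : forall X, bounded_family d X -> P X)
  (Hs : forall X, (forall Rs, exists Y, finite_APC_family d Y /\ P Y /\ decomposes d X Y Rs) -> P X)
  (X : family M) (H : finite_APC_family d X) {struct H} : P X :=
  match H with
  | APC_bounded _ X hb => Hb X hb
  | APC_step _ X hs => Hs X (fun Rs =>
      match hs Rs with
      | ex_intro _ Y (conj hY hd) => ex_intro _ Y (conj hY (conj (fin_ind' d P Hb Hs Y hY) hd))
      end)
  end.
Section S.
Lemma mul_Vr (G : Group) (x : G) : gmul x (ginv x) = gone.
Proof.
  rewrite <- (gmul_1l G (gmul x (ginv x))).
  rewrite <- (gmul_Vl G (ginv x)) at 1.
  rewrite <- gmul_assoc, (gmul_assoc G (ginv x) x (ginv x)), gmul_Vl, gmul_1l.
  apply gmul_Vl.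
Qed.

Lemma mul_1r (G : Group) (x : G) : gmul x gone = x.
Proof. rewrite <- (gmul_Vl G x), gmul_assoc, mul_Vr, gmul_1l. reflexivity. Qed.

Lemma mul_cancel (G : Group) (a b c : G) : gmul a b = gmul a c -> b = c.
Proof.
  intro H. rewrite <- (gmul_1l G b), <- (gmul_1l G c), <- (gmul_Vl G a),
    <- !gmul_assoc, H. reflexivity.
Qed.

Lemma hom_one (G H : Group) (f : G -> H) : is_hom f -> f gone = gone.
Proof.
  intro hf. apply (mul_cancel H (f gone)). rewrite <- hf, gmul_1l, mul_1r. reflexivity.
Qed.

Lemma hom_inv (G H : Group) (f : G -> H) : is_hom f -> forall x, f (ginv x) = ginv (f x).
Proof.
  intros hf x. apply (mul_cancel H (f x)). rewrite <- hf, !mul_Vr. apply hom_one; auto.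
Qed.

Lemma dist_1 (G : Group) (d : G -> G -> R) : left_invariant d ->
  forall x y, d x y = d gone (gmul (ginv x) y).
Proof. intros H x y. rewrite <- (gmul_Vl G x). symmetry. apply H. Qed.

Lemma list_bound (A : Type) (l : list A) (P : A -> R -> Prop) :
  (forall a, In a l -> exists r, P a r) ->
  (forall a r r', P a r -> r <= r' -> P a r') ->
  exists S, forall a, In a l -> P a S.
Proof.
  intros H1 H2. induction l as [|a l IH].
  - exists 0. intros a [].
  - destruct (H1 a (or_introl eq_refl)) as [r Hr].
    destruct IH as [S HS]. { intros b Hb. apply H1. right. auto. }
    exists (Rmax r S). intros b [<-|Hb].
    + apply (H2 _ r); auto. apply Rmax_l.
    + apply (H2 _ S); auto. apply Rmax_r.
Qed.

Lemma rho_hom (G1 G2 : Group) (d1 : G1 -> G1 -> R) (d2 : G2 -> G2 -> R) (f : G1 -> G2) :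
  proper_metric d1 -> left_invariant d1 -> left_invariant d2 -> is_hom f ->
  forall r, exists S, forall x y, d1 x y <= r -> d2 (f x) (f y) <= S.
Proof.
  intros p1 l1 l2 hf r. destruct (p1 gone r) as [l Hl].
  destruct (list_bound _ l (fun z s => d2 gone (f z) <= s)) as [S HS].
  - intros a _. exists (d2 gone (f a)). lra.
  - intros; lra.
  - exists S. intros x y Hxy. rewrite (dist_1 _ d2 l2), <- hom_inv, <- hf; auto.
    apply HS, Hl. rewrite <- dist_1; auto.
Qed.

Lemma sigma_inj (K G : Group) (dK : K -> K -> R) (dG : G -> G -> R) (i : K -> G) :
  proper_metric dG -> left_invariant dG -> left_invariant dK -> is_hom i ->
  (forall x y, i x = i y -> x = y) ->
  forall r, exists S, forall x y, dG (i x) (i y) <= r -> dK x y <= S.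
Proof.
  intros pG lG lK hi inj r. destruct (pG gone r) as [l Hl].
  destruct (list_bound _ l (fun g s => forall k, i k = g -> dK gone k <= s)) as [S HS].
  - intros g _. destruct (classic (exists k, i k = g)) as [[k0 Hk0]|Hno].
    + exists (dK gone k0). intros k Hk. rewrite (inj k k0) by congruence. lra.
    + exists 0. intros k Hk. exfalso. eauto.
  - intros a s s' H1 H2 k Hk. specialize (H1 k Hk). lra.
  - exists S. intros x y Hxy. rewrite (dist_1 _ dK lK). apply (HS (i (gmul (ginv x) y))); auto.
    apply Hl. rewrite hi, hom_inv, <- dist_1; auto.
Qed.

Lemma fin_mono {M : Type} (d : M -> M -> R) (X X' : family M) :
  finite_APC_family d X -> (forall A, X' A -> X A) -> finite_APC_family d X'.
Proof.
  intros H Hs. destruct H as [X Hb|X Hst].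
  - apply APC_bounded. destruct Hb as [b Hb]. exists b. eauto.
  - apply APC_step. intros Rs. destruct (Hst Rs) as [Y [HY [k Hk]]].
    exists Y; split; auto. exists k. intros A HA. apply Hk; auto.
Qed.

Lemma pull {M M' : Type} (d : M -> M -> R) (d' : M' -> M' -> R) (f : M -> M')
  (rho : R -> R) (Hrho : forall r x y, d x y <= r -> d' (f x) (f y) <= rho r)
  (Hb : forall Z, bounded_family d' Z ->
     finite_APC_family d (fun A => exists B, Z B /\ forall x, A x -> B (f x))) :
  forall Z, finite_APC_family d' Z ->
     finite_APC_family d (fun A => exists B, Z B /\ forall x, A x -> B (f x)).
Proof.
  apply fin_ind'.
  - exact Hb.
  - intros Z HZ. apply APC_step. intros Rs.
    destruct (HZ (fun j => rho (Rs j))) as [Y [_ [IH [k Hk]]]].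
    exists (fun A => exists B, Y B /\ forall x, A x -> B (f x)). split; [exact IH|].
    exists k. intros A [Bz [HBz HA]]. destruct (Hk Bz HBz) as [U [HU1 [HU2 HU3]]].
    exists (fun j C => exists B, U j B /\ C = (fun x => A x /\ B (f x))). split; [|split].
    + intros j Hj C [B [HB ->]]. destruct (HU1 j Hj B HB) as [HYB Hsub]. split.
      * exists B; split; auto. intros x [_ Hx]; auto.
      * intros x [Hx _]; auto.
    + intros j Hj C C' [B [HB ->]] [B' [HB' ->]] Hne x y [Hx Hbx] [Hy Hby].
      assert (Hn : B <> B') by (intro; subst; apply Hne; reflexivity).
      specialize (HU2 j Hj B B' HB HB' Hn (f x) (f y) Hbx Hby). simpl in HU2.
      destruct (Rle_or_lt (d x y) (Rs j)) as [Hl|Hl]; [|lra].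
      specialize (Hrho _ _ _ Hl). lra.
    + intros x Hx. destruct (HU3 (f x) (HA x Hx)) as [j [B [Hj [HB HBx]]]].
      exists j, (fun x => A x /\ B (f x)). split; auto. split; [exists B; auto|split; auto].
Qed.

Lemma push {M M' T : Type} (d : M -> M -> R) (d' : M' -> M' -> R) (f : T -> M -> M')
  (Hd' : is_metric d')
  (rho : forall b, exists S, forall t x y, d x y <= b -> d' (f t x) (f t y) <= S)
  (sigma : R -> R) (Hsig : forall t r x y, d' (f t x) (f t y) <= r -> d x y <= sigma r)
  (D : R) :
  forall X, finite_APC_family d X ->
    finite_APC_family d' (fun C => exists t A, X A /\
        forall c, C c -> exists a, A a /\ d' c (f t a) <= D).
Proof.
  destruct Hd' as [_ [_ [Hsym Htri]]].
  apply fin_ind'.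
  - intros X [b Hb]. destruct (rho b) as [S HS]. apply APC_bounded. exists (D + S + D).
    intros C [t [A [HA HC]]] c c' Hc Hc'.
    destruct (HC c Hc) as [a [Ha Hca]]. destruct (HC c' Hc') as [a' [Ha' Hca']].
    pose proof (HS t a a' (Hb A HA a a' Ha Ha')).
    pose proof (Htri c (f t a) c'). pose proof (Htri (f t a) (f t a') c').
    rewrite (Hsym (f t a') c') in *. lra.
  - intros X HX. apply APC_step. intros Rs.
    destruct (HX (fun j => sigma (Rs j + 2 * D))) as [Y [_ [IH [k Hk]]]].
    eexists; split; [exact IH|].
    exists k. intros C [t [A [HA HC]]]. destruct (Hk A HA) as [U [HU1 [HU2 HU3]]].
    exists (fun j C' => exists B, U j B /\
       C' = (fun c => C c /\ exists b, B b /\ d' c (f t b) <= D)). split; [|split].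
    + intros j Hj C' [B [HB ->]]. destruct (HU1 j Hj B HB) as [HYB Hsub]. split.
      * exists t, B. split; auto. intros c [_ Hc]; auto.
      * intros c [Hc _]; auto.
    + intros j Hj C1 C2 [B [HB ->]] [B' [HB' ->]] Hne x y [Hx [b [Hb Hxb]]] [Hy [b' [Hb' Hyb]]].
      assert (Hn : B <> B') by (intro; subst; apply Hne; reflexivity).
      specialize (HU2 j Hj B B' HB HB' Hn b b' Hb Hb'). simpl in HU2.
      destruct (Rle_or_lt (d' x y) (Rs j)) as [Hl|Hl]; [|lra].
      assert (d' (f t b) (f t b') <= Rs j + 2 * D).
      { pose proof (Htri (f t b) x (f t b')). pose proof (Htri x y (f t b')).
        rewrite (Hsym (f t b) x) in *. lra. }
      specialize (Hsig _ _ _ _ H). lra.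
    + intros c Hc. destruct (HC c Hc) as [a [Ha Hca]].
      destruct (HU3 a Ha) as [j [B [Hj [HB HBa]]]].
      exists j, (fun c => C c /\ exists b, B b /\ d' c (f t b) <= D).
      split; auto. split; [exists B; auto|]. split; auto. exists a; auto.
Qed.
End S.

Theorem theorem4p8 (K G H : Group) (i : K -> G) (p : G -> H)
  (dK : K -> K -> R) (dG : G -> G -> R) (dH : H -> H -> R) :
  countable_group K -> countable_group G -> countable_group H ->
  short_exact i p ->
  proper_left_invariant_metric dK ->
  proper_left_invariant_metric dG ->
  proper_left_invariant_metric dH ->
  finite_APC dK -> finite_APC dH -> finite_APC dG.
Proof.
  intros _ _ _ [hi [hp [iinj [psurj pker]]]] [mK [pK lK]] [mG [pG lG]] [mH [pH lH]]
    [FK [FK1 FKfin]] [FH [FH1 FHfin]].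
  pose proof (rho_hom G H dG dH p pG lG lH hp) as Hrp.
  pose proof (rho_hom K G dK dG i pK lK lG hi) as Hri.
  pose proof (sigma_inj K G dK dG i pG lG lK hi iinj) as Hsi.
  set (rho := fun r => proj1_sig (constructive_indefinite_description _ (Hrp r))).
  assert (Hrho : forall r x y, dG x y <= r -> dH (p x) (p y) <= rho r).
  { intros r. exact (proj2_sig (constructive_indefinite_description _ (Hrp r))). }
  set (sig := fun r => proj1_sig (constructive_indefinite_description _ (Hsi r))).
  assert (Hsig : forall r x y, dG (i x) (i y) <= r -> dK x y <= sig r).
  { intros r. exact (proj2_sig (constructive_indefinite_description _ (Hsi r))). }
  exists (fun A => exists B, FH B /\ forall x, A x -> B (p x)). split.
  { exists (fun _ => True). split; auto. }
  apply (pull dG dH p rho Hrho); auto.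
  intros Z [b Hb].
  destruct (pH gone b) as [L HL].
  destruct (list_bound _ L (fun c r => exists s, p s = c /\ dG s gone <= r)) as [D HD].
  { intros c _. destruct (psurj c) as [s Hs]. exists (dG s gone), s. split; auto; lra. }
  { intros c r r' [s [H1 H2]] H3. exists s. split; auto; lra. }
  refine (fin_mono dG _ _ (push dK dG (fun t k => gmul t (i k)) mG _ sig _ D FK FKfin) _).
  - intros b'. destruct (Hri b') as [S HS]. exists S. intros t x y Hxy.
    rewrite lG. auto.
  - intros t r x y Hxy. rewrite lG in Hxy. auto.
  - intros A [B [HZB HA]].
    destruct (classic (exists a0, A a0)) as [[a0 Ha0]|Hno].
    + exists a0, (fun _ => True). split; auto. intros a Ha.
      set (z := gmul (ginv a0) a).
      assert (Hz : In (p z) L).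
      { apply HL. unfold z. rewrite hp, hom_inv, <- dist_1; auto. apply (Hb B); auto. }
      destruct (HD _ Hz) as [s [Hs Hsd]].
      destruct (proj1 (pker (gmul z (ginv s)))) as [k Hk].
      { rewrite hp, hom_inv, Hs, mul_Vr; auto. }
      exists k. split; auto.
      assert (Ha' : a = gmul (gmul a0 (i k)) s).
      { rewrite Hk, <- !gmul_assoc, gmul_Vl, mul_1r. unfold z.
        rewrite gmul_assoc, mul_Vr, gmul_1l. reflexivity. }
      rewrite Ha'. rewrite <- (mul_1r G (gmul a0 (i k))) at 2. rewrite lG. exact Hsd.
    + exists gone, (fun _ => True). split; auto. intros c Hc. exfalso; eauto.
Qed.
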